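(* Let $1\le\tau_1<\dots<\tau_m$ be thresholds, $P,Q$ two candidates, and $Z^*$ a point of the metric space minimizing $SC$. If $P$ beats $Q$ under Weighted Majority Rule 4 and $\delta_I=SC(P)/SC(Q)>\tau_m$, then $SC(P)/SC(Z^* )\le\frac{2\delta_I}{\delta_I-\tau_m}$.
   Context: Voters $N$ and candidates are points of an arbitrary metric space $(X,d)$; $SC(Y)=\sum_{i\in N}d(i,Y)$ for $Y\in X$. Set $\tau_0=1/\tau_1$, $\tau_{m+1}=\infty$, $\delta=\max_{0\le l\le m}\frac{\tau_l\tau_{l+1}+2\tau_{l+1}-1}{\tau_l\tau_{l+1}+1}$ (the $l=m$ term meaning $(\tau_m+2)/\tau_m$), and $k\in\{1,\dots,m\}$ with $\tau_k\le\delta<\tau_{k+1}$; $\frac{\tau_{m+1}-\delta}{\tau_{m+1}-1}:=1$. Preference strength of $i$ for $P$ over $Q$ is $\alpha_i^{PQ}=d(i,Q)/d(i,P)$ when $d(i,P)\le d(i,Q)$. $A_l=\{i: d(i,P)\le d(i,Q),\ \tau_l\le\alpha_i^{PQ}<\tau_{l+1}\}$, $B_l=\{j: d(j,Q)\le d(j,P),\ \tau_l\le\alpha_j^{QP}<\tau_{l+1}\}$, $C$ the remaining voters. Weighted Majority Rule 4: for $l<k$ voters in $A_l\cup B_l$ get weight $\frac{(\delta+1)(\tau_l\tau_{l+1}-1)}{(\tau_l+1)(\tau_{l+1}+1)}$; for $l\ge k$ they get weight $\frac{\tau_{l+1}-\delta}{\tau_{l+1}-1}+\frac{\delta\tau_l-1}{\tau_l+1}$;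 voters in $C$ get weight $0$; $P$ beats $Q$ iff the total weight of $\bigcup_lA_l$ is at least that of $\bigcup_lB_l$. *)

(* Defs.v *)
From HB Require Import structures.
From mathcomp Require Import all_boot all_order all_algebra.
Set Implicit Arguments. Unset Strict Implicit. Unset Printing Implicit Defensive.
Import Order.TTheory GRing.Theory Num.Theory.
Local Open Scope ring_scope.

Section WMR4.
Variable R : realFieldType.

Definition is_metric (X : Type) (d : X -> X -> R) : Prop :=
  [/\ forall x y, 0 <= d x y,
      forall x y, d x y = 0 <-> x = y,
      forall x y, d x y = d y x &
      forall x y z, d x z <= d x y + d y z].

Definition SC (X : Type) (N : finType) (d : X -> X -> R) (pos : N -> X) (Y : X) : R :=
  \sum_(i : N) d (pos i) Y.

(* thresholds tau_1 < ... < tau_m (tau indexed by nat, only 1..m used);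
   tau_0 := 1/tau_1 *)
Definition tauE (tau : nat -> R) (l : nat) : R :=
  if l == 0%N then (tau 1%N)^-1 else tau l.

Definition delta_term (tau : nat -> R) (m l : nat) : R :=
  if l == m then (tau m + 2) / tau m
  else (tauE tau l * tau l.+1 + 2 * tau l.+1 - 1) / (tauE tau l * tau l.+1 + 1).

Definition delta (tau : nat -> R) (m : nat) : R :=
  \big[Num.max/delta_term tau m m]_(l < m) delta_term tau m l.

(* weight of voters in A_l \cup B_l under Weighted Majority Rule 4 *)
Definition wmr4_weight (tau : nat -> R) (m k l : nat) : R :=
  let dl := delta tau m in
  if (l < k)%N then
    (dl + 1) * (tauE tau l * tau l.+1 - 1) / ((tauE tau l + 1) * (tau l.+1 + 1))
  else
    (if l == m then 1 else (tau l.+1 - dl) / (tau l.+1 - 1))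
    + (dl * tauE tau l - 1) / (tauE tau l + 1).

(* i is in A_l (for candidates P over Q): d(i,P) <= d(i,Q) and
   tau_l <= alpha_i^{PQ} < tau_{l+1}, with alpha = d(i,Q)/d(i,P)
   (alpha = +infinity when d(i,P) = 0) and tau_{m+1} = +infinity;
   written in cross-multiplied form to handle d(i,P) = 0. *)
Definition in_band (X : Type) (d : X -> X -> R) (x P Q : X)
    (tau : nat -> R) (m l : nat) : bool :=
  [&& d x P <= d x Q,
      tauE tau l * d x P <= d x Q &
      (l < m)%N ==> (d x Q < tau l.+1 * d x P)].

Definition wmr4_score (X : Type) (N : finType) (d : X -> X -> R) (pos : N -> X)
    (P Q : X) (tau : nat -> R) (m k : nat) : R :=
  \sum_(i : N) \sum_(l < m.+1)
     (if in_band d (pos i) P Q tau m l then wmr4_weight tau m k l else 0).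

Definition wmr4_beats (X : Type) (N : finType) (d : X -> X -> R) (pos : N -> X)
    (P Q : X) (tau : nat -> R) (m k : nat) : Prop :=
  wmr4_score d pos Q P tau m k <= wmr4_score d pos P Q tau m k.

End WMR4.

(* Main.v *)
Require Import Defs.
From HB Require Import structures.
From mathcomp Require Import all_boot all_order all_algebra.
From mathcomp Require Import ring lra.
Import Order.TTheory GRing.Theory Num.Theory.
Local Open Scope ring_scope.

Lemma frac_le (R : realFieldType) (a b c e : R) :
  0 < b -> 0 < e -> a * e <= c * b -> a / b <= c / e.
Proof.
move=> hb he h. rewrite ler_pdivrMr // mulrAC ler_pdivlMr //.
Qed.

Lemma tau_mono (R : realFieldType) (tau : nat -> R) (m : nat) :
  (forall l, (1 <= l)%N -> (l < m)%N -> tau l < tau l.+1) ->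
  forall i j, (1 <= i)%N -> (i <= j)%N -> (j <= m)%N -> tau i <= tau j.
Proof.
move=> hinc i j; elim: j => [|j IH] hi hij hjm.
  by move: (leq_trans hi hij).
case: (ltngtP i j.+1) hij => // [hlt _|-> _]; last exact: lexx.
have hij' : (i <= j)%N by rewrite -ltnS.
apply: le_trans (IH hi hij' (ltnW hjm)) _.
apply: ltW; apply: hinc => //; exact: leq_trans hi hij'.
Qed.

Arguments tau_mono {R tau m}.
Arguments frac_le {R}.

Section W.
Variables (R : realFieldType) (m : nat) (tau : nat -> R) (k : nat).
Hypotheses (hm : (1 <= m)%N) (h1 : 1 <= tau 1%N)
  (hinc : forall l, (1 <= l)%N -> (l < m)%N -> tau l < tau l.+1)
  (hk1 : (1 <= k)%N) (hkm : (k <= m)%N)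
  (hkd : tau k <= delta tau m) (hkd2 : (k < m)%N -> delta tau m < tau k.+1).

Let D := delta tau m.
Let W l := wmr4_weight tau m k l.

Lemma tau_ge1 l : (1 <= l)%N -> (l <= m)%N -> 1 <= tau l.
Proof. move=> a b; apply: le_trans h1 _. exact: (tau_mono hinc 1 l (leqnn 1) a b). Qed.

Lemma D_ge1 : 1 <= D.
Proof. apply: le_trans hkd; exact: (tau_ge1 _ hk1 hkm). Qed.

Lemma Wm_eq : W m = (D + 1) * tau m / (tau m + 1).
Proof.
have t1 := tau_ge1 _ hm (leqnn m).
rewrite /W /wmr4_weight ltnNge hkm /= eqxx /tauE.
have -> : (m == 0%N) = false by case: m hm.
rewrite -/D. field. lra.
Qed.

Lemma Wm_pos : 0 < W m.
Proof.
have t1 := tau_ge1 _ hm (leqnn m). have := D_ge1.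
rewrite Wm_eq => hD. apply: divr_gt0; last lra. apply: mulr_gt0; lra.
Qed.

Lemma W_bounds l : (l <= m)%N -> 0 <= W l /\ W l <= W m.
Proof.
move=> hl. have h1p := h1.
have tm := tau_ge1 _ hm (leqnn m). have hD := D_ge1.
case: (ltnP l k) => hlk.
  have hl1 : (l.+1 <= m)%N by apply: leq_trans hkm.
  have ty1 := tau_ge1 _ (isT : (1 <= l.+1)%N) hl1.
  have tym : tau l.+1 <= tau m by apply: (tau_mono hinc).
  rewrite Wm_eq /W /wmr4_weight hlk -/D /tauE.
  case: (posnP l) => [->|hl0] /=.
    have t1p : 0 < tau 1 by lra.
    have t1n : tau 1 != 0 by rewrite gt_eqF.
    have ti : 0 < (tau 1)^-1 by rewrite invr_gt0; lra.
    rewrite mulVf // subrr mulr0 !mul0r. split=> //.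
    apply: divr_ge0; last lra. apply: mulr_ge0; lra.
  have tl1 := tau_ge1 _ hl0 (ltnW hl1).
  have tll : tau l <= tau l.+1 by apply: (tau_mono hinc) => //; exact: ltnW.
  split.
    apply: divr_ge0; first apply: mulr_ge0; try nra.
  apply: frac_le; first apply: mulr_gt0; try lra.
  have hq : (tau l * tau l.+1 - 1) * (tau m + 1) <= tau m * ((tau l + 1) * (tau l.+1 + 1)).
    have a1 : 0 <= tau l by lra. have a2 : 0 <= tau m - tau l.+1 by lra.
    have := mulr_ge0 a1 a2. nra.
  have hD1 : 0 <= D + 1 by lra.
  have := ler_wpM2l hD1 hq. rewrite !mulrA. lra.
case: (eqVneq l m) => [->|hne].
  split; last exact: lexx. have := Wm_pos. lra.
rewrite Wm_eq /W /wmr4_weight ltnNge hlk /= -/D /tauE.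
have hl0 : (0 < l)%N by apply: leq_trans hlk.
have -> : (l == 0%N) = false by case: l hl0 {hlk hl hne}.
have tl1 := tau_ge1 _ hl0 hl.
rewrite (negbTE hne).
have hlm : (l < m)%N by rewrite ltn_neqAle hne.
have hkm' : (k < m)%N by apply: leq_ltn_trans hlm.
have hy : D < tau l.+1.
  apply: lt_le_trans (hkd2 hkm') _. apply: (tau_mono hinc) => //.
have tll : tau l <= tau m by apply: (tau_mono hinc).
split.
  apply: addr_ge0; apply: divr_ge0; nra.
have -> : (D + 1) * tau m / (tau m + 1) = 1 + (D * tau m - 1) / (tau m + 1).
  field; lra.
apply: lerD.
  rewrite -[1 in X in _ <= X](divr1 1). apply: frac_le; lra.
apply: frac_le; nra.
Qed.
Lemma band_excl (X : Type) (d : X -> X -> R) (x P Q : X) (l l' : nat) :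
  (l < l')%N -> (l' <= m)%N -> 0 <= d x P ->
  in_band d x P Q tau m l -> in_band d x P Q tau m l' -> False.
Proof.
move=> hll hl'm hu; rewrite /in_band => /and3P [_ _ h] /and3P [_ h' _].
have hlm : (l < m)%N by apply: leq_trans hl'm.
move: (implyP h hlm) h' => hv.
have -> : tauE tau l' = tau l'.
  rewrite /tauE; by case: l' hll hl'm {h} => //.
have hmono : tau l.+1 <= tau l' by apply: (tau_mono hinc).
have := ler_wpM2r hu hmono. lra.
Qed.

Lemma voter_right (X : Type) (d : X -> X -> R) (x P Q : X) :
  0 <= d x P ->
  \sum_(l < m.+1) (if in_band d x P Q tau m l then W l else 0)
    <= (if d x P <= d x Q then W m else 0).
Proof.
move=> hu. have hWm := Wm_pos.
case: ifP => huv; last first.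
  rewrite big1 // => l _. by rewrite /in_band huv.
case: (boolP [exists l : 'I_m.+1, in_band d x P Q tau m l]) =>
    [/existsP [l0 hb0] | /existsPn hn].
  rewrite (bigD1 l0) //= hb0 big1 ?addr0.
    exact: (W_bounds _ (ltn_ord l0)).2.
  move=> l hne. case: ifP => // hb. exfalso.
  case: (ltngtP l l0) => hc.
  - exact: (band_excl _ _ _ _ _ _ _ hc (ltn_ord l0) hu hb hb0).
  - exact: (band_excl _ _ _ _ _ _ _ hc (ltn_ord l) hu hb0 hb).
  - by move: hne; rewrite (val_inj hc) eqxx.
rewrite big1; first lra.
move=> l _. by rewrite (negbTE (hn l)).
Qed.

Lemma voter_left (X : Type) (d : X -> X -> R) (x P Q : X) :
  (if (d x Q <= d x P) && (tau m * d x Q <= d x P) then W m else 0)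
  <= \sum_(l < m.+1) (if in_band d x Q P tau m l then W l else 0).
Proof.
have hs : forall l : 'I_m.+1, 0 <= (if in_band d x Q P tau m l then W l else 0).
  by move=> l; case: ifP => // _; exact: (W_bounds _ (ltn_ord l)).1.
case: ifP => [/andP [hq1 hq2]|_]; last by apply: sumr_ge0.
rewrite (bigD1 ord_max) //=.
have -> : in_band d x Q P tau m (@ord_max m) = true.
  change (in_band d x Q P tau m m = true).
  have hm0 : (m == 0%N) = false by case: m hm {hq2 hs}.
  by rewrite /in_band /tauE hm0 hq1 hq2 ltnn.
rewrite lerDl. by apply: sumr_ge0.
Qed.
End W.

Lemma voter_f (R : realFieldType) (u v z a b t Wm : R) :
  0 <= u -> 0 <= v -> 0 <= z -> 1 <= t -> 0 < Wm -> 0 <= a - b ->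
  a <= z + u -> u <= z + a -> b <= z + v -> v <= z + b ->
  Wm * (u - t * v - 2 * z) <=
  (a - b) * ((if (v <= u) && (t * v <= u) then Wm else 0)
             - (if u <= v then Wm else 0)).
Proof.
move=> hu hv hz ht hW hE t1 t2 t3 t4.
have htv : v <= t * v by have := ler_wpM2r hv ht; rewrite mul1r.
have fE : u - t * v - 2 * z <= a - b by lra.
have hWE := ler_wpM2l (ltW hW) fE.
case: (lerP u v) => huv.
  have fA : u - t * v - 2 * z <= - (a - b) by lra.
  have hWA := ler_wpM2l (ltW hW) fA.
  have hEW := mulr_ge0 hE (ltW hW).
  case: ifP => _; nra.
case: ifP => [/andP [_ h2]|/negbT].
  rewrite subr0. nra.
rewrite negb_and => /orP [/negP h|/negP h].
  exfalso; apply: h; exact: ltW.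
have hlt : u < t * v by rewrite ltNge; apply/negP.
have f0 : u - t * v - 2 * z <= 0 by lra.
have := ler_wpM2l (ltW hW) f0. rewrite mulr0 subr0 mulr0. lra.
Qed.

Theorem mainTheorem19 (R : realFieldType) (X : Type) (d : X -> X -> R)
    (N : finType) (pos : N -> X)
    (m : nat) (tau : nat -> R) (k : nat) (P Q Zs : X) :
  is_metric d ->
  (1 <= m)%N ->
  1 <= tau 1%N ->
  (forall l, (1 <= l)%N -> (l < m)%N -> tau l < tau l.+1) ->
  (1 <= k)%N -> (k <= m)%N ->
  tau k <= delta tau m ->
  ((k < m)%N -> delta tau m < tau k.+1) ->
  (forall Y : X, SC d pos Zs <= SC d pos Y) ->
  wmr4_beats d pos P Q tau m k ->
  tau m < SC d pos P / SC d pos Q ->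
  SC d pos P / SC d pos Zs
    <= 2 * (SC d pos P / SC d pos Q) / (SC d pos P / SC d pos Q - tau m).
Proof.
move=> hmet hm h1 hinc hk1 hkm hkd hkd2 _ hbeat hlt.
case: hmet => hd0 _ hsym htri.
have Wp := Wm_pos R m tau k hm h1 hinc hk1 hkm hkd.
have tm1 : 1 <= tau m := tau_ge1 R m tau h1 hinc m hm (leqnn m).
set Wm := wmr4_weight tau m k m in Wp.
have key : SC d pos P - tau m * SC d pos Q <= 2 * SC d pos Zs.
  rewrite /SC.
  suff : \sum_i (d (pos i) P - tau m * d (pos i) Q - 2 * d (pos i) Zs) <= 0.
    rewrite !sumrB -!mulr_sumr. lra.
  set E := d Zs P - d Zs Q.
  case: (lerP 0 E) => hE; last first.
    apply: sumr_le0 => i _.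
    have := htri Zs (pos i) P. have := htri (pos i) Zs P.
    have := htri Zs (pos i) Q. have := htri (pos i) Zs Q.
    rewrite (hsym Zs (pos i)).
    have hv := hd0 (pos i) Q.
    have htv : d (pos i) Q <= tau m * d (pos i) Q
      by have := ler_wpM2r hv tm1; rewrite mul1r.
    rewrite /E in hE. lra.
  pose Bw i := if (d (pos i) Q <= d (pos i) P) && (tau m * d (pos i) Q <= d (pos i) P)
               then Wm else 0.
  pose Aw i := if d (pos i) P <= d (pos i) Q then Wm else 0.
  have cnt : \sum_i Bw i <= \sum_i Aw i.
    apply: le_trans (ler_sum _ (fun i _ => voter_left R m tau k hm h1 hinc hk1 hkm hkd hkd2 X d (pos i) P Q)) _.
    apply: le_trans hbeat _.
    apply: ler_sum => i _.
    exact: (voter_right R m tau k hm h1 hinc hk1 hkm hkd hkd2 X d (pos i) P Q (hd0 _ _)).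
  have hsum : Wm * \sum_i (d (pos i) P - tau m * d (pos i) Q - 2 * d (pos i) Zs)
              <= E * (\sum_i Bw i - \sum_i Aw i).
    rewrite mulr_sumr -sumrB mulr_sumr. apply: ler_sum => i _.
    apply: voter_f => //; try exact: hd0;
      first [exact: htri | rewrite (hsym (pos i) Zs); exact: htri].
  move: hsum cnt.
  set S := \sum_i _. set SB := \sum_i Bw i. set SA := \sum_i Aw i.
  move=> hsum cnt.
  have hSB : 0 <= SA - SB by lra.
  have := mulr_ge0 hE hSB.
  nra.
have hp : 0 <= SC d pos P by apply: sumr_ge0 => i _; exact: hd0.
have q0 : 0 <= SC d pos Q by apply: sumr_ge0 => i _; exact: hd0.
have hz : 0 <= SC d pos Zs by apply: sumr_ge0 => i _; exact: hd0.
move: key hlt hp q0 hz.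
set p := SC d pos P. set q := SC d pos Q. set z := SC d pos Zs.
move=> key hlt hp q0 hz.
have hq : 0 < q.
  rewrite lt_neqAle q0 andbT; apply/negP => /eqP hq0.
  rewrite -hq0 invr0 mulr0 in hlt. lra.
have hpq : tau m * q < p by rewrite -ltr_pdivlMr.
have hqn : q != 0 by rewrite gt_eqF.
have hpqn : p - tau m * q != 0 by rewrite gt_eqF // subr_gt0.
have -> : 2 * (p / q) / (p / q - tau m) = 2 * p / (p - tau m * q).
  field. by rewrite hpqn hqn.
case: (eqVneq z 0) => [->|hz0].
  rewrite invr0 mulr0. apply: divr_ge0; lra.
have hzp : 0 < z by rewrite lt_neqAle eq_sym hz0 hz.
apply: frac_le => //; first lra.
nra.
Qed.
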